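(* Let $u$ be a $C^2$ solution of $$ r\left(1+4u'^2+3u'^4\right) - 2u'\left(1+u'^2\right) + 2r\,u''\left(3u'^2-1\right)=0 \qquad (\ast)$$ with initial conditions $u(0)=0$, $u'(0)=0$, extended to its maximal interval of existence as a solution of $(\ast)$ (equivalently of $u''=-\frac{1+4u'^2+3u'^4}{2(3u'^2-1)}+\frac{u'(1+u'^2)}{r(3u'^2-1)}$ for $r>0$). Then the maximal domain is a bounded interval $[0,r_M)$ with $0<r_M<\infty$, and $\lim_{r\to r_M^-}u'(r)=\frac{1}{\sqrt3}$.
   Context: The solution with $u(0)=u'(0)=0$ exists locally in $C^2$ near $r=0$ and satisfies $u''(0)=1/4$. The coefficient $3u'^2-1$ of $u''$ in $(\ast)$ vanishes exactly when $u'=\pm 1/\sqrt3$. *)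

(* Defs.v *)
From Stdlib Require Import Reals.
From Coquelicot Require Import Coquelicot.
Open Scope R_scope.

Definition in_dom (Rm : Rbar) (x : R) : Prop := 0 <= x /\ Rbar_lt x Rm.

Definition is_derive_dom (Rm : Rbar) (f df : R -> R) : Prop :=
  forall r, in_dom Rm r ->
    filterlim (fun h => (f (r + h) - f r) / h)
      (within (fun h => h <> 0 /\ in_dom Rm (r + h)) (locally 0))
      (locally (df r)).

Definition continuous_dom (Rm : Rbar) (f : R -> R) : Prop :=
  forall r, in_dom Rm r ->
    filterlim f (within (in_dom Rm) (locally r)) (locally (f r)).

Definition C2_dom (Rm : Rbar) (u du d2u : R -> R) : Prop :=
  is_derive_dom Rm u du /\ is_derive_dom Rm du d2u /\ continuous_dom Rm d2u.

Definition ode_star (r p q : R) : Prop :=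
  r * (1 + 4 * p ^ 2 + 3 * p ^ 4) - 2 * p * (1 + p ^ 2)
    + 2 * r * q * (3 * p ^ 2 - 1) = 0.

Definition is_solution (Rm : Rbar) (u du d2u : R -> R) : Prop :=
  C2_dom Rm u du d2u /\
  (forall r, in_dom Rm r -> ode_star r (du r) (d2u r)) /\
  u 0 = 0 /\ du 0 = 0.

Definition is_maximal_solution (Rm : Rbar) (u du d2u : R -> R) : Prop :=
  is_solution Rm u du d2u /\
  forall (Rm' : Rbar) (v dv d2v : R -> R),
    Rbar_lt Rm Rm' -> is_solution Rm' v dv d2v ->
    ~ (forall r, in_dom Rm r -> v r = u r).

(* Main.v *)
Require Import Defs.
From Stdlib Require Import Reals Lra Psatz ZArith.
From Coquelicot Require Import Coquelicot.
Open Scope R_scope.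


Lemma ball_R (x e y : R) : ball x e y <-> Rabs (y - x) < e.
Proof. reflexivity. Qed.

Lemma lip_cont (f : R -> R) (M : R) : 0 <= M ->
  (forall x y, Rabs (f x - f y) <= M * Rabs (x - y)) -> forall x, continuous f x.
Proof.
  intros HM H x P [eps HP].
  assert (Hd : 0 < eps / (M + 1)).
  { apply Rdiv_lt_0_compat; [apply cond_pos | lra]. }
  exists (mkposreal _ Hd). intros y Hy. apply HP.
  rewrite ball_R in Hy |- *. simpl in Hy.
  eapply Rle_lt_trans. apply H.
  apply Rle_lt_trans with ((M+1) * Rabs (y - x)).
  - apply Rmult_le_compat_r. apply Rabs_pos. lra.
  - assert (HH : (M + 1) * (eps / (M+1)) = eps) by (field; lra).
    rewrite <- HH. apply Rmult_lt_compat_l; lra.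
Qed.

Lemma RInt_lip (f : R -> R) (M a t t' : R) :
  (forall s, continuous f s) -> (forall s, Rabs (f s) <= M) ->
  Rabs (RInt f a t - RInt f a t') <= M * Rabs (t - t').
Proof.
  intros Hc Hb.
  assert (Hex : forall u v, ex_RInt f u v).
  { intros u v. apply (ex_RInt_continuous (V:=R_CompleteNormedModule)). intros; apply Hc. }
  assert (E : RInt f a t - RInt f a t' = RInt f t' t).
  { rewrite <- (RInt_Chasles f a t' t) by auto. unfold plus; simpl. ring. }
  rewrite E.
  destruct (Rle_dec t' t) as [Hle|Hle].
  - rewrite (Rabs_right (t - t')) by lra.
    rewrite Rmult_comm. apply abs_RInt_le_const; auto.
  - rewrite <- opp_RInt_swap by auto. unfold opp; simpl. rewrite Rabs_Ropp.
    rewrite (Rabs_left (t - t')) by lra.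
    replace (- (t - t')) with (t' - t) by ring.
    rewrite Rmult_comm. apply abs_RInt_le_const; auto. lra.
Qed.

Lemma geo_zero (E C : R) : (forall n, Rabs E <= C * (1/2)^n) -> E = 0.
Proof.
  intros H.
  destruct (Req_dec E 0) as [|HE]; auto. exfalso.
  assert (HC : 0 <= C). { specialize (H O). simpl in H. pose proof (Rabs_pos E). lra. }
  assert (Hp : 0 < Rabs E / (C + 1)).
  { apply Rdiv_lt_0_compat. apply Rabs_pos_lt; auto. lra. }
  destruct (pow_lt_1_zero (1/2) ltac:(rewrite Rabs_right; lra) _ Hp) as [N HN].
  specialize (HN N (le_n N)). specialize (H N).
  rewrite Rabs_right in HN by (apply Rle_ge, pow_le; lra).
  assert ((C+1) * (1/2)^N < Rabs E).
  { apply Rmult_lt_compat_l with (r := C+1) in HN; [|lra].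
    replace ((C + 1) * (Rabs E / (C + 1))) with (Rabs E) in HN by (field; lra). lra. }
  assert (0 <= (1/2)^N) by (apply pow_le; lra). nra.
Qed.

Definition clampI (lo hi r : R) := Rmax lo (Rmin hi r).

Lemma clampI_lip lo hi r r' : Rabs (clampI lo hi r - clampI lo hi r') <= Rabs (r - r').
Proof.
  unfold clampI, Rmax, Rmin.
  repeat destruct Rle_dec; unfold Rabs;
  repeat destruct Rcase_abs; lra.
Qed.


Fixpoint pic (G : R -> R -> R) (x0 y0 d : R) (n : nat) : R -> R :=
  match n with
  | O => fun _ => y0
  | S m => fun r => y0 + RInt (fun s => G s (pic G x0 y0 d m s)) x0 (clampI x0 (x0+d) r)
  end.

Lemma exRI (f : R -> R) u v : (forall s, continuous f s) -> ex_RInt f u v.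
Proof. intros Hc. apply (ex_RInt_continuous (V:=R_CompleteNormedModule)). intros; apply Hc. Qed.

Lemma clampI_in lo hi r : lo <= hi -> lo <= clampI lo hi r <= hi.
Proof. unfold clampI, Rmax, Rmin; repeat destruct Rle_dec; lra. Qed.

Lemma clampI_id lo hi r : lo <= r <= hi -> clampI lo hi r = r.
Proof. unfold clampI, Rmax, Rmin; repeat destruct Rle_dec; lra. Qed.

Lemma RInt_diff_bound (f g : R -> R) a c B :
  a <= c -> (forall s, continuous f s) -> (forall s, continuous g s) ->
  (forall s, Rabs (f s - g s) <= B) ->
  Rabs (RInt f a c - RInt g a c) <= (c - a) * B.
Proof.
  intros Hac Hf Hg Hb.
  assert (E : RInt f a c - RInt g a c = RInt (fun s => f s - g s) a c).
  { symmetry. apply (RInt_minus (V:=R_CompleteNormedModule)); apply exRI; auto. }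
  rewrite E. apply abs_RInt_le_const; auto.
  apply (ex_RInt_minus (V:=R_NormedModule)); apply exRI; auto.
Qed.

Lemma sub_cancel2 (y a b : R) : (y + a) - (y + b) = a - b. Proof. ring. Qed.
Lemma sub_cancel1 (y a : R) : (y + a) - y = a. Proof. ring. Qed.
Lemma picard (G : R -> R -> R) (K M x0 y0 d : R) :
  0 < d -> 0 <= K -> K * d <= 1/2 -> 0 <= M ->
  (forall r y, Rabs (G r y) <= M) ->
  (forall r y1 y2, Rabs (G r y1 - G r y2) <= K * Rabs (y1 - y2)) ->
  (forall y : R -> R, (forall s, continuous y s) -> forall s, continuous (fun s => G s (y s)) s) ->
  exists P : R -> R, (forall r r', Rabs (P r - P r') <= M * Rabs (r - r')) /\
    forall r, x0 <= r <= x0 + d -> P r = y0 + RInt (fun s => G s (P s)) x0 r.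
Proof.
  intros Hd HK HKd HM HGb HGl HGc.
  set (it := pic G x0 y0 d).
  assert (Hlip : forall n r r', Rabs (it n r - it n r') <= M * Rabs (r - r')).
  { induction n as [|n IH]; intros r r'; simpl.
    - unfold it; simpl. rewrite Rminus_diag, Rabs_R0. pose proof (Rabs_pos (r - r')). nra.
    - unfold it; simpl. fold it.
      rewrite sub_cancel2.
      eapply Rle_trans. apply RInt_lip.
      + apply HGc. apply (lip_cont _ M HM). apply IH.
      + intros; apply HGb.
      + apply Rmult_le_compat_l; auto. apply clampI_lip. }
  assert (Hcont : forall n s, continuous (it n) s).
  { intros n. apply (lip_cont _ M HM). apply Hlip. }
  assert (Hcl : forall r, x0 <= clampI x0 (x0+d) r <= x0 + d).
  { intros r. apply clampI_in. lra. }
  assert (Hdiff : forall n r, Rabs (it (S n) r - it n r) <= M * d * (1/2)^n).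
  { induction n as [|n IH]; intros r.
    - unfold it; simpl. rewrite sub_cancel1.
      specialize (Hcl r).
      eapply Rle_trans. apply abs_RInt_le_const. lra.
      apply exRI. apply HGc. intros; apply continuous_const.
      intros; apply HGb. nra.
    - change (Rabs (y0 + RInt (fun s => G s (it (S n) s)) x0 (clampI x0 (x0+d) r)
         - (y0 + RInt (fun s => G s (it n s)) x0 (clampI x0 (x0+d) r))) <= M * d * (1/2)^(S n)).
      rewrite sub_cancel2.
      specialize (Hcl r).
      eapply Rle_trans. apply RInt_diff_bound with (B := K * (M * d * (1/2)^n)).
      lra. apply HGc, Hcont. apply HGc, Hcont.
      intros s. eapply Rle_trans. apply HGl. apply Rmult_le_compat_l; auto.
      simpl. assert (0 <= M * d * (1/2)^n) by (apply Rmult_le_pos; [nra|apply pow_le; lra]).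
      assert (0 <= K * (M * d * (1/2)^n)) by nra.
      assert ((clampI x0 (x0 + d) r - x0) * (K * (M * d * (1 / 2) ^ n)) <= (K * d) * (M * d * (1/2)^n)) by nra.
      nra. }
  assert (Hcau : forall k n r, Rabs (it (n + k)%nat r - it n r) <= 2 * M * d * (1/2)^n * (1 - (1/2)^k)).
  { induction k as [|k IH]; intros n r.
    - rewrite Nat.add_0_r, Rminus_diag, Rabs_R0. simpl. lra.
    - replace (n + S k)%nat with (S (n + k)) by lia.
      eapply Rle_trans. 
      replace (it (S (n + k)) r - it n r) with ((it (S (n + k)) r - it (n+k)%nat r) + (it (n + k)%nat r - it n r)) by ring.
      apply Rabs_triang.
      eapply Rle_trans. apply Rplus_le_compat. apply Hdiff. apply IH.
      rewrite pow_add. simpl. lra. }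
  assert (Hcau' : forall k n r, Rabs (it (n + k)%nat r - it n r) <= 2 * M * d * (1/2)^n).
  { intros k n r. eapply Rle_trans. apply Hcau.
    assert (0 <= (1/2)^k) by (apply pow_le; lra).
    assert (0 <= 2 * M * d * (1/2)^n) by (apply Rmult_le_pos; [nra|apply pow_le; lra]). nra. }
  assert (Hconv : forall r, is_lim_seq (fun n => it n r) (real (Lim_seq (fun n => it n r)))).
  { intros r. apply Lim_seq_correct'. apply ex_lim_seq_cauchy_corr.
    intros eps.
    assert (Hp : 0 < eps / (2 * M * d + 1)).
    { apply Rdiv_lt_0_compat. apply cond_pos. nra. }
    destruct (pow_lt_1_zero (1/2) ltac:(rewrite Rabs_right; lra) _ Hp) as [N HN].
    exists N. intros n m Hn Hm.
    assert (key : forall a b, (N <= a)%nat -> (a <= b)%nat -> Rabs (it b r - it a r) < eps).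
    { intros a b Ha Hab. replace b with (a + (b - a))%nat by lia.
      eapply Rle_lt_trans. apply Hcau'.
      specialize (HN a Ha). rewrite Rabs_right in HN by (apply Rle_ge, pow_le; lra).
      apply Rmult_lt_compat_l with (r := 2 * M * d + 1) in HN; [|nra].
      replace ((2 * M * d + 1) * (eps / (2 * M * d + 1))) with (pos eps) in HN by (field; nra).
      assert (0 <= (1/2)^a) by (apply pow_le; lra). nra. }
    destruct (Nat.le_ge_cases n m).
    - rewrite Rabs_minus_sym. apply key; lia.
    - apply key; lia. }
  set (P := fun r => real (Lim_seq (fun n => it n r))).
  assert (Hbnd : forall n r, Rabs (P r - it n r) <= 2 * M * d * (1/2)^n).
  { intros n r.
    assert (L1 : is_lim_seq (fun k => Rabs (it (k + n)%nat r - it n r)) (Rabs (P r - it n r))).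
    { apply (is_lim_seq_abs _ (P r - it n r)).
      apply is_lim_seq_minus'. apply (is_lim_seq_incr_n (fun k => it k r)). apply Hconv.
      apply is_lim_seq_const. }
    assert (Hk : forall k, Rabs (it (k + n)%nat r - it n r) <= 2 * M * d * (1/2)^n)
      by (intros k; rewrite Nat.add_comm; apply Hcau').
    pose proof (is_lim_seq_le _ _ _ _ Hk L1 (is_lim_seq_const (2 * M * d * (1/2)^n))) as HH.
    simpl in HH. exact HH. }
  assert (HPlip : forall r r', Rabs (P r - P r') <= M * Rabs (r - r')).
  { intros r r'.
    assert (L1 : is_lim_seq (fun k => Rabs (it k r - it k r')) (Rabs (P r - P r'))).
    { apply (is_lim_seq_abs _ (P r - P r')). apply is_lim_seq_minus'; apply Hconv. }
    pose proof (is_lim_seq_le _ _ _ _ (fun k => Hlip k r r') L1 (is_lim_seq_const _)) as HH.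
    exact HH. }
  exists P. split; auto.
  intros r Hr.
  assert (HPc : forall s, continuous P s) by (apply (lip_cont _ M HM); auto).
  apply Rminus_diag_uniq.
  apply (geo_zero _ (2 * M * d)). intros n.
  assert (E1 : it (S n) r = y0 + RInt (fun s => G s (it n s)) x0 r).
  { unfold it; simpl. rewrite clampI_id by lra. reflexivity. }
  replace (P r - (y0 + RInt (fun s : R => G s (P s)) x0 r)) with
    ((P r - it (S n) r) + (RInt (fun s => G s (it n s)) x0 r - RInt (fun s : R => G s (P s)) x0 r))
    by (rewrite E1; ring).
  eapply Rle_trans. apply Rabs_triang.
  eapply Rle_trans. apply Rplus_le_compat. apply Hbnd.
  apply RInt_diff_bound with (B := K * (2 * M * d * (1/2)^n)).
  lra. apply HGc, Hcont. apply HGc, HPc.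
  intros s. eapply Rle_trans. apply HGl. apply Rmult_le_compat_l; auto.
  rewrite Rabs_minus_sym. apply Hbnd.
  simpl.
  assert (0 <= (1/2)^n) by (apply pow_le; lra).
  assert (0 <= M * d * (1/2)^n) by (apply Rmult_le_pos; [nra|auto]).
  assert ((r - x0) * (K * (2 * M * d * (1 / 2) ^ n)) <= 2 * (K * d) * (M * d * (1/2)^n)).
  { assert (0 <= K * (2 * M * d * (1 / 2) ^ n)) by nra. nra. }
  nra.
Qed.


Definition cont_at (f : R -> R) (z : R) :=
  forall eps, 0 < eps -> exists d, 0 < d /\ forall x, Rabs (x - z) < d -> Rabs (f x - f z) < eps.

Lemma continuous_cont_at f z : continuous f z -> cont_at f z.
Proof.
  intros H eps He.
  pose proof (proj1 (filterlim_locally f (f z)) H (mkposreal eps He)) as [d Hd].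
  exists d. split. apply cond_pos. intros x Hx. apply (Hd x). exact Hx.
Qed.

Lemma cont_at_continuous f z : cont_at f z -> continuous f z.
Proof.
  intros H. apply filterlim_locally. intros eps.
  destruct (H eps (cond_pos eps)) as [d [Hd H2]].
  exists (mkposreal d Hd). intros x Hx. apply H2. exact Hx.
Qed.

Lemma dom_nbhd (Rm : Rbar) r : 0 < r -> Rbar_lt r Rm ->
  exists e, 0 < e /\ forall x, Rabs (x - r) < e -> in_dom Rm x.
Proof.
  intros Hr Hm. destruct Rm as [m| |]; simpl in Hm.
  - exists (Rmin r (m - r)). split. apply Rmin_pos; lra.
    intros x Hx. pose proof (Rmin_l r (m - r)). pose proof (Rmin_r r (m - r)).
    unfold in_dom; simpl. revert Hx; unfold Rabs; destruct Rcase_abs; intros; split; lra.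
  - exists r. split; [auto|]. intros x Hx. unfold in_dom; simpl.
    revert Hx; unfold Rabs; destruct Rcase_abs; intros; split; auto; lra.
  - contradiction.
Qed.

Lemma dom_right (Rm : Rbar) : Rbar_lt 0 Rm -> exists e, 0 < e /\ forall x, 0 <= x < e -> in_dom Rm x.
Proof.
  intros Hm. destruct Rm as [m| |]; simpl in Hm.
  - exists m. split; [auto|]. intros x Hx. split; simpl; lra.
  - exists 1. split. lra. intros x Hx. split; simpl; auto; lra.
  - contradiction.
Qed.

Lemma deriv_pt_lim (Rm : Rbar) f df r : is_derive_dom Rm f df -> 0 < r -> Rbar_lt r Rm ->
  derivable_pt_lim f r (df r).
Proof.
  intros H Hr Hm eps He.
  destruct (dom_nbhd Rm r Hr Hm) as [e [He' Hdom]].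
  assert (Hr' : in_dom Rm r) by (apply Hdom; rewrite Rminus_diag, Rabs_R0; auto).
  pose proof (proj1 (filterlim_locally _ _) (H r Hr') (mkposreal eps He)) as [d Hd].
  assert (Hm' : 0 < Rmin d e) by (apply Rmin_pos; [apply cond_pos|auto]).
  exists (mkposreal _ Hm'). intros h Hh Hlt. simpl in Hlt.
  pose proof (Rmin_l d e). pose proof (Rmin_r d e).
  apply (Hd h).
  - change (Rabs (h - 0) < d). rewrite Rminus_0_r. lra.
  - split; auto. apply Hdom. replace (r + h - r) with h by ring. lra.
Qed.

Lemma deriv_int (Rm : Rbar) f df r : is_derive_dom Rm f df -> 0 < r -> Rbar_lt r Rm ->
  is_derive f r (df r).
Proof. intros. apply is_derive_Reals. eapply deriv_pt_lim; eauto. Qed.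

Lemma deriv_cpt (Rm : Rbar) f df r : is_derive_dom Rm f df -> 0 < r -> Rbar_lt r Rm ->
  continuity_pt f r.
Proof.
  intros. apply continuity_pt_filterlim. apply (ex_derive_continuous (K:=R_AbsRing) (V:=R_NormedModule)). exists (df r).
  eapply deriv_int; eauto.
Qed.

Lemma deriv_cont (Rm : Rbar) f df r : is_derive_dom Rm f df -> 0 < r -> Rbar_lt r Rm ->
  cont_at f r.
Proof.
  intros. apply continuous_cont_at. apply continuity_pt_filterlim. eapply deriv_cpt; eauto.
Qed.

Lemma cdom_cont (Rm : Rbar) f r : continuous_dom Rm f -> 0 < r -> Rbar_lt r Rm -> cont_at f r.
Proof.
  intros H Hr Hm eps He.
  destruct (dom_nbhd Rm r Hr Hm) as [e [He' Hdom]].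
  assert (Hr' : in_dom Rm r) by (apply Hdom; rewrite Rminus_diag, Rabs_R0; auto).
  pose proof (proj1 (filterlim_locally _ _) (H r Hr') (mkposreal eps He)) as [d Hd].
  exists (Rmin d e). split. apply Rmin_pos; [apply cond_pos|auto].
  intros x Hx. pose proof (Rmin_l d e). pose proof (Rmin_r d e).
  apply (Hd x). change (Rabs (x - r) < d). lra. apply Hdom. lra.
Qed.

Lemma deriv_zero (Rm : Rbar) f df : Rbar_lt 0 Rm -> is_derive_dom Rm f df ->
  forall eps, 0 < eps -> exists d, 0 < d /\ forall h, 0 < h < d -> Rabs ((f h - f 0) / h - df 0) < eps.
Proof.
  intros Hm H eps He.
  destruct (dom_right Rm Hm) as [e [He' Hdom]].
  assert (H0 : in_dom Rm 0) by (apply Hdom; lra).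
  pose proof (proj1 (filterlim_locally _ _) (H 0 H0) (mkposreal eps He)) as [d Hd].
  exists (Rmin d e). split. apply Rmin_pos; [apply cond_pos|auto].
  intros h Hh. pose proof (Rmin_l d e). pose proof (Rmin_r d e).
  pose proof (Hd h) as HH. rewrite Rplus_0_l in HH. apply HH.
  change (Rabs (h - 0) < d). rewrite Rminus_0_r, Rabs_right; lra.
  split. lra. apply Hdom. lra.
Qed.

Lemma cdom_zero (Rm : Rbar) f : Rbar_lt 0 Rm -> continuous_dom Rm f ->
  forall eps, 0 < eps -> exists d, 0 < d /\ forall h, 0 <= h < d -> Rabs (f h - f 0) < eps.
Proof.
  intros Hm H eps He.
  destruct (dom_right Rm Hm) as [e [He' Hdom]].
  assert (H0 : in_dom Rm 0) by (apply Hdom; lra).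
  pose proof (proj1 (filterlim_locally _ _) (H 0 H0) (mkposreal eps He)) as [d Hd].
  exists (Rmin d e). split. apply Rmin_pos; [apply cond_pos|auto].
  intros h Hh. pose proof (Rmin_l d e). pose proof (Rmin_r d e).
  apply (Hd h). change (Rabs (h - 0) < d). rewrite Rminus_0_r, Rabs_right; lra.
  apply Hdom. lra.
Qed.

Lemma cont_ind (a b : R) (P : R -> Prop) :
  (exists e, 0 < e /\ forall r, a < r < a + e -> r < b -> P r) ->
  (forall z, a < z < b -> (forall r, a < r < z -> P r) ->
      exists e, 0 < e /\ forall r, z <= r < z + e -> r < b -> P r) ->
  forall r, a < r < b -> P r.
Proof.
  intros [e0 [He0 Hbase]] Hstep r0 Hr0.
  set (S := fun t => a <= t <= b /\ forall r, a < r < t -> P r).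
  assert (Hb : bound S) by (exists b; intros t [Ht _]; lra).
  assert (Hne : exists t, S t) by (exists a; split; [lra|]; intros; lra).
  destruct (completeness S Hb Hne) as [T [HTub HTlub]].
  assert (HTb : T <= b) by (apply HTlub; intros t [Ht _]; lra).
  assert (Hbelow : forall r, a < r < T -> P r).
  { intros r Hr. apply Classical_Prop.NNPP. intros Hn.
    assert (Hu : is_upper_bound S r).
    { intros t Ht. destruct (Rle_dec t r) as [|Htr]; auto.
      exfalso. apply Hn. apply (proj2 Ht). lra. }
    apply HTlub in Hu. lra. }
  assert (HaT : a < T).
  { set (t1 := a + Rmin e0 (b - a) / 2).
    pose proof (Rmin_l e0 (b - a)). pose proof (Rmin_r e0 (b - a)).
    assert (0 < Rmin e0 (b - a)) by (apply Rmin_pos; lra).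
    assert (S (a + Rmin e0 (b - a) / 2)). { split. lra. intros r Hr. apply Hbase; lra. }
    apply HTub in H2. lra. }
  destruct (Req_dec T b) as [HTe|HTne].
  - apply Hbelow. lra.
  - exfalso. destruct (Hstep T ltac:(lra) Hbelow) as [e [He Hs]].
    pose proof (Rmin_l (T + e/2) b). pose proof (Rmin_r (T + e/2) b).
    assert (S (Rmin (T + e/2) b)).
    { split. split; [|lra]. unfold Rmin; destruct Rle_dec; lra.
      intros r Hr.
      destruct (Rlt_dec r T). apply Hbelow; lra. apply Hs; lra. }
    apply HTub in H1.
    revert H1; unfold Rmin; destruct Rle_dec; intros; lra.
Qed.


Lemma cont_left_ge f z c : 0 < z -> cont_at f z -> (forall r, 0 < r < z -> c < f r) -> c <= f z.
Proof.
  intros Hz Hc H. destruct (Rle_dec c (f z)) as [|Hn]; auto. exfalso.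
  destruct (Hc (c - f z) ltac:(lra)) as [d [Hd Hd2]].
  set (r := z - Rmin d z / 2).
  pose proof (Rmin_l d z). pose proof (Rmin_r d z). assert (0 < Rmin d z) by (apply Rmin_pos; lra).
  assert (Hr1 : Rabs (r - z) < d) by (unfold r; rewrite Rabs_left; lra).
  specialize (Hd2 r Hr1). specialize (H r ltac:(unfold r; lra)).
  revert Hd2; unfold Rabs; destruct Rcase_abs; lra.
Qed.

Lemma cont_pos f z : cont_at f z -> 0 < f z -> exists e, 0 < e /\ forall x, Rabs (x - z) < e -> 0 < f x.
Proof.
  intros Hc Hz. destruct (Hc (f z) Hz) as [d [Hd H]]. exists d. split; auto.
  intros x Hx. specialize (H x Hx). revert H; unfold Rabs; destruct Rcase_abs; lra.
Qed.

Lemma mvt_dom (Rm : Rbar) f df x y : is_derive_dom Rm f df -> 0 < x -> x < y -> Rbar_lt y Rm ->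
  exists c, x <= c <= y /\ f y - f x = df c * (y - x).
Proof.
  intros H Hx Hxy Hy.
  assert (Hin : forall c, x <= c <= y -> Rbar_lt c Rm).
  { intros c Hc. destruct Rm as [m| |]; simpl in *; auto; lra. }
  assert (A1 : forall c, Rmin x y < c < Rmax x y -> is_derive f c (df c)).
  { intros c Hc. rewrite Rmin_left, Rmax_right in Hc by lra.
    apply (deriv_int Rm); [exact H | lra | apply Hin; lra]. }
  assert (A2 : forall c, Rmin x y <= c <= Rmax x y -> continuity_pt f c).
  { intros c Hc. rewrite Rmin_left, Rmax_right in Hc by lra.
    apply (deriv_cpt Rm f df); [exact H | lra | apply Hin; lra]. }
  destruct (MVT_gen f x y df A1 A2) as [c [Hc E]].
  rewrite Rmin_left, Rmax_right in Hc by lra. exists c. auto.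
Qed.

Lemma seq_right (g : R -> R) (l r0 : R) : 0 < r0 ->
  (forall eps, 0 < eps -> exists d, 0 < d /\ forall h, 0 < h < d -> Rabs (g h - l) < eps) ->
  is_lim_seq (fun n => g (r0 / (INR n + 1))) l.
Proof.
  intros Hr0 H. apply is_lim_seq_spec. intros eps.
  destruct (H eps (cond_pos eps)) as [d [Hd H2]].
  destruct (archimed (r0 / d)) as [Ha _].
  assert (Hz : (0 <= up (r0 / d))%Z).
  { apply le_IZR. assert (0 < r0 / d) by (apply Rdiv_lt_0_compat; auto). simpl; lra. }
  exists (Z.to_nat (up (r0 / d))). intros n Hn.
  apply H2. apply le_INR in Hn. rewrite INR_IZR_INZ, Z2Nat.id in Hn by auto.
  assert (0 < INR n + 1) by (pose proof (pos_INR n); lra).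
  split. apply Rdiv_lt_0_compat; lra.
  apply Rlt_div_l; auto.
  assert (r0 / d * d = r0) by (field; lra).
  assert (r0 / d < INR n + 1) by lra.
  apply Rmult_lt_compat_r with (r := d) in H3; auto. nra.
Qed.

Lemma q0_val (Rm : Rbar) (u du d2u : R -> R) : Rbar_lt 0 Rm -> is_solution Rm u du d2u ->
  d2u 0 = 1/4.
Proof.
  intros Hm [[Hd1 [Hd2 Hc]] [Hode [Hu0 Hp0]]].
  destruct (dom_right Rm Hm) as [e [He Hdom]].
  set (r0 := e / 2).
  set (rn := fun n : nat => r0 / (INR n + 1)).
  assert (Hrn : forall n, 0 < rn n < e).
  { intros n. unfold rn, r0. pose proof (pos_INR n).
    split. apply Rdiv_lt_0_compat; lra. apply Rlt_div_l; [lra|nra]. }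
  set (q0 := d2u 0).
  assert (La : is_lim_seq (fun n => du (rn n) / rn n) q0).
  { apply (seq_right (fun h => du h / h)). unfold r0; lra.
    intros eps He'. destruct (deriv_zero Rm du d2u Hm Hd2 eps He') as [d [Hd H]].
    exists d. split; auto. intros h Hh. specialize (H h Hh). rewrite Hp0, Rminus_0_r in H. exact H. }
  assert (Lc : is_lim_seq (fun n => d2u (rn n)) q0).
  { apply (seq_right d2u). unfold r0; lra.
    intros eps He'. destruct (cdom_zero Rm d2u Hm Hc eps He') as [d [Hd H]].
    exists d. split; auto. intros h Hh. apply H. lra. }
  assert (Lp : is_lim_seq (fun n => du (rn n)) 0).
  { apply is_lim_seq_ext with (fun n => (du (rn n) / rn n) * rn n).
    intros n. specialize (Hrn n). field. lra.
    replace 0 with (q0 * 0) by ring. apply is_lim_seq_mult'. exact La.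
    unfold rn. apply (seq_right (fun h => h)). unfold r0; lra.
    intros eps He'. exists eps. split; auto. intros h Hh. rewrite Rminus_0_r, Rabs_right; lra. }
  set (a := fun n => du (rn n)). set (b := fun n => du (rn n) / rn n). set (c := fun n => d2u (rn n)).
  assert (E : forall n, 1 + 4 * a n ^ 2 + 3 * a n ^ 4 - 2 * b n * (1 + a n ^ 2) + 2 * c n * (3 * a n ^ 2 - 1) = 0).
  { intros n. specialize (Hrn n). specialize (Hode (rn n) (Hdom (rn n) ltac:(lra))).
    unfold ode_star in Hode. unfold a, b, c.
    apply Rmult_eq_reg_l with (rn n); [|lra]. rewrite Rmult_0_r. rewrite <- Hode. field. lra. }
  assert (L2 : forall (x y : nat -> R) (lx ly : R), is_lim_seq x lx -> is_lim_seq y ly -> is_lim_seq (fun n => x n * y n) (lx * ly)).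
  { intros. apply is_lim_seq_mult'; auto. }
  assert (L3 : forall (x y : nat -> R) (lx ly : R), is_lim_seq x lx -> is_lim_seq y ly -> is_lim_seq (fun n => x n + y n) (lx + ly)).
  { intros. apply is_lim_seq_plus'; auto. }
  assert (L4 : forall (x y : nat -> R) (lx ly : R), is_lim_seq x lx -> is_lim_seq y ly -> is_lim_seq (fun n => x n - y n) (lx - ly)).
  { intros. apply is_lim_seq_minus'; auto. }
  assert (Lk : forall k, is_lim_seq (fun _ : nat => k) k) by (intros; apply is_lim_seq_const).
  assert (La2 : is_lim_seq (fun n => a n ^ 2) 0).
  { apply is_lim_seq_ext with (fun n => a n * a n). intros; simpl; ring.
    replace 0 with (0 * 0) by ring. apply L2; exact Lp. }
  assert (La4 : is_lim_seq (fun n => a n ^ 4) 0).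
  { apply is_lim_seq_ext with (fun n => a n ^ 2 * a n ^ 2). intros; simpl; ring.
    replace 0 with (0 * 0) by ring. apply L2; exact La2. }
  assert (LE : is_lim_seq (fun n => 1 + 4 * a n ^ 2 + 3 * a n ^ 4 - 2 * b n * (1 + a n ^ 2) + 2 * c n * (3 * a n ^ 2 - 1))
       (1 + 4 * 0 + 3 * 0 - 2 * q0 * (1 + 0) + 2 * q0 * (3 * 0 - 1))).
  { apply L3. apply L4. apply L3. apply L3. apply Lk. apply L2. apply Lk. exact La2.
    apply L2. apply Lk. exact La4.
    apply L2. apply L2. apply Lk. exact La. apply L3. apply Lk. exact La2.
    apply L2. apply L2. apply Lk. exact Lc. apply L4. apply L2. apply Lk. exact La2. apply Lk. }
  apply is_lim_seq_ext with (v := fun _ => 0) in LE; [|exact E].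
  apply is_lim_seq_unique in LE. rewrite Lim_seq_const in LE. injection LE. intros. fold q0. lra.
Qed.


Definition sq3 := 1 / sqrt 3.

Lemma sq3_sq : sq3 ^ 2 = 1/3.
Proof.
  unfold sq3. assert (H := sqrt_sqrt 3 ltac:(lra)). assert (0 < sqrt 3) by (apply sqrt_lt_R0; lra).
  field_simplify; [|lra]. rewrite <- H at 2. field. lra.
Qed.

Lemma sq3_pos : 0 < sq3.
Proof. unfold sq3. assert (0 < sqrt 3) by (apply sqrt_lt_R0; lra). apply Rdiv_lt_0_compat; lra. Qed.

Lemma sq3_bnd : 0.57 < sq3 < 0.58.
Proof. pose proof sq3_sq. pose proof sq3_pos. split; nra. Qed.

Lemma ode_g r p q : ode_star r p q -> (1 + p^2) * (r * (1 + 3 * p^2) - 2 * p) = 2 * r * q * (1 - 3 * p^2).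
Proof.
  unfold ode_star. intros H.
  assert (E : (1 + p^2) * (r * (1 + 3 * p^2) - 2 * p) - 2 * r * q * (1 - 3 * p^2) =
     r * (1 + 4 * p ^ 2 + 3 * p ^ 4) - 2 * p * (1 + p ^ 2) + 2 * r * q * (3 * p ^ 2 - 1)) by ring.
  lra.
Qed.

Lemma cont_at_aff f z (al be ga : R) : cont_at f z -> cont_at (fun x => al * x + be * f x + ga) z.
Proof.
  intros Hc eps He.
  assert (Hb : 0 < eps / (2 * (Rabs be + 1))).
  { apply Rdiv_lt_0_compat; [lra|]. pose proof (Rabs_pos be). lra. }
  destruct (Hc _ Hb) as [d [Hd H]].
  assert (Ha : 0 < eps / (2 * (Rabs al + 1))).
  { apply Rdiv_lt_0_compat; [lra|]. pose proof (Rabs_pos al). lra. }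
  exists (Rmin d (eps / (2 * (Rabs al + 1)))). split. apply Rmin_pos; auto.
  intros x Hx. pose proof (Rmin_l d (eps / (2 * (Rabs al + 1)))). pose proof (Rmin_r d (eps / (2 * (Rabs al + 1)))).
  specialize (H x ltac:(lra)).
  replace (al * x + be * f x + ga - (al * z + be * f z + ga)) with (al * (x - z) + be * (f x - f z)) by ring.
  eapply Rle_lt_trans. apply Rabs_triang. rewrite !Rabs_mult.
  pose proof (Rabs_pos al). pose proof (Rabs_pos be). pose proof (Rabs_pos (x - z)). pose proof (Rabs_pos (f x - f z)).
  assert (E1 : Rabs al * Rabs (x - z) <= eps / 2).
  { apply Rle_trans with ((Rabs al + 1) * (eps / (2 * (Rabs al + 1)))).
    apply Rmult_le_compat; lra. right. field. lra. }
  assert (E2 : Rabs be * Rabs (f x - f z) < eps / 2).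
  { apply Rle_lt_trans with ((Rabs be) * (eps / (2 * (Rabs be + 1)))).
    apply Rmult_le_compat_l; lra.
    apply Rlt_le_trans with ((Rabs be + 1) * (eps / (2 * (Rabs be + 1)))).
    apply Rmult_lt_compat_r; lra. right. field. lra. }
  lra.
Qed.

Definition Inv (du d2u : R -> R) (r : R) :=
  0 < d2u r /\ 0 < du r /\ du r < sq3 /\ (r <= sq3 -> du r < r / 2).

Lemma inv_all (Rm : Rbar) (u du d2u : R -> R) : Rbar_lt 0 Rm -> is_solution Rm u du d2u ->
  forall r, 0 < r -> Rbar_lt r Rm -> Inv du d2u r.
Proof.
  intros Hm Hsol. pose proof (q0_val Rm u du d2u Hm Hsol) as Hq0.
  destruct Hsol as [[Hd1 [Hd2 Hc]] [Hode [Hu0 Hp0]]].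
  pose proof sq3_sq as S2. pose proof sq3_bnd as SB.
  intros r Hr HrM.
  assert (Hb : exists b, r < b /\ forall x, 0 < x < b -> Rbar_lt x Rm).
  { destruct Rm as [m| |]; simpl in HrM.
    - exists ((r + m) / 2). split. lra. intros x Hx. simpl. lra.
    - exists (r + 1). split. lra. intros; simpl; auto.
    - contradiction. }
  destruct Hb as [b [Hrb Hbm]].
  assert (Hdomx : forall x, 0 < x < b -> in_dom Rm x) by (intros x Hx; split; [lra | apply Hbm; auto]).
  apply (cont_ind 0 b (Inv du d2u)); [| |lra].
  -
    destruct (deriv_zero Rm du d2u Hm Hd2 (1/8) ltac:(lra)) as [d1 [Hd1' H1]].
    destruct (cdom_zero Rm d2u Hm Hc (1/8) ltac:(lra)) as [d2 [Hd2' H2]].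
    exists (Rmin (Rmin d1 d2) (1/2)). split. repeat apply Rmin_pos; lra.
    intros x Hx _. pose proof (Rmin_l (Rmin d1 d2) (1/2)). pose proof (Rmin_r (Rmin d1 d2) (1/2)).
    pose proof (Rmin_l d1 d2). pose proof (Rmin_r d1 d2).
    specialize (H1 x ltac:(lra)). specialize (H2 x ltac:(lra)).
    rewrite Hp0, Rminus_0_r, Hq0 in H1. rewrite Hq0 in H2.
    apply Rabs_def2 in H1. apply Rabs_def2 in H2.
    assert (E : du x = (du x / x) * x) by (field; lra).
    unfold Inv. split; [lra|]. split; [nra|]. split; [nra|]. intros _. nra.
  -
    intros z Hz IH.
    assert (HzR : Rbar_lt z Rm) by (apply Hbm; lra).
    assert (Cp : cont_at du z) by (eapply deriv_cont; eauto; lra).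
    assert (Cq : cont_at d2u z) by (eapply cdom_cont; eauto; lra).
    assert (Hodez : ode_star z (du z) (d2u z)) by (apply Hode; split; [lra|auto]).
    assert (F1 : 0 <= d2u z).
    { apply (cont_left_ge d2u z 0); auto; try lra. intros x Hx. apply (IH x Hx). }
    assert (F2 : du z <= sq3).
    { assert (HH : 0 <= (fun x => 0 * x + (-1) * du x + sq3) z).
      { apply (cont_left_ge (fun x => 0 * x + (-1) * du x + sq3) z 0); [lra| apply cont_at_aff; auto |].
        intros x Hx. destruct (IH x Hx) as [_ [_ [H _]]]. lra. }
      simpl in HH. lra. }
    assert (F3 : 0 < du z).
    { destruct (mvt_dom Rm du d2u (z/2) z Hd2 ltac:(lra) ltac:(lra) HzR) as [c [Hc' E]].
      destruct (IH (z/2) ltac:(lra)) as [_ [H _]].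
      assert (0 <= d2u c).
      { destruct (Req_dec c z) as [->|Hne]; auto. left. apply (IH c). lra. }
      nra. }
    assert (F4 : z <= sq3 -> du z < z / 2).
    { intros Hzs.
      assert (HH : 0 <= (fun x => (1/2) * x + (-1) * du x + 0) z).
      { apply (cont_left_ge (fun x => (1/2) * x + (-1) * du x + 0) z 0); [lra| apply cont_at_aff; auto |].
        intros x Hx. destruct (IH x Hx) as [_ [_ [_ H]]]. specialize (H ltac:(lra)). lra. }
      simpl in HH. destruct (Rle_lt_or_eq_dec (du z) (z/2) ltac:(lra)) as [|Heq]; auto.
      exfalso.
      assert (Hq : d2u z <= 13/72).
      { unfold ode_star in Hodez. rewrite Heq in Hodez.
        assert (E : z * (3 * z^2 / 4 + 3 * z^4/16 - 2 * d2u z * (1 - 3 * z^2 / 4)) = 0).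
        { match type of Hodez with ?A = 0 => assert (E0 : z * (3 * z^2 / 4 + 3 * z^4/16 - 2 * d2u z * (1 - 3 * z^2 / 4)) = A) by field end. lra. }
        apply Rmult_integral in E. destruct E as [E|E]; [lra|].
        assert (Hw : z^2 <= 1/3) by nra.
        destruct (Rle_dec (d2u z) (13/72)) as [|Hn]; auto. exfalso.
        assert (z^4 = z^2 * z^2) by ring. nra. }
      destruct (Cq (1/4) ltac:(lra)) as [d [Hd Hq']].
      set (r1 := z - Rmin d z / 2).
      pose proof (Rmin_l d z). pose proof (Rmin_r d z). assert (0 < Rmin d z) by (apply Rmin_pos; lra).
      destruct (mvt_dom Rm du d2u r1 z Hd2 ltac:(unfold r1; lra) ltac:(unfold r1; lra) HzR) as [c [Hc' E]].
      assert (Hqc : d2u c < 1/2).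
      { assert (Rabs (c - z) < d) by (unfold r1 in Hc'; rewrite Rabs_left1; lra).
        specialize (Hq' c H2). apply Rabs_def2 in Hq'. lra. }
      destruct (IH r1 ltac:(unfold r1; lra)) as [Hq1 [_ [_ Hh1]]].
      specialize (Hh1 ltac:(unfold r1; lra)).
      assert (0 <= d2u c).
      { destruct (Req_dec c z) as [->|Hne]; auto. left. apply (IH c). unfold r1 in Hc'; lra. }
      assert (z - r1 > 0) by (unfold r1; lra). nra. }
    assert (F5 : du z < sq3).
    { destruct (Rle_dec z sq3) as [Hzs|Hzs]. specialize (F4 Hzs). lra.
      destruct (Rle_lt_or_eq_dec (du z) sq3 F2) as [|Heq]; auto. exfalso.
      unfold ode_star in Hodez. rewrite Heq in Hodez.
      assert (S4 : sq3^4 = 1/9) by (replace (sq3^4) with ((sq3^2)^2) by ring; rewrite S2; field).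
      rewrite S2, S4 in Hodez.
      assert (E : z * (8/3) - sq3 * (8/3) = 0).
      { rewrite <- Hodez. field. }
      lra. }
    assert (F6 : 0 < d2u z).
    { destruct (Rle_lt_or_eq_dec 0 (d2u z) F1) as [|Heq]; auto. exfalso.
      pose proof (ode_g _ _ _ Hodez) as G. rewrite <- Heq in G.
      assert (Gz : z * (1 + 3 * du z ^ 2) - 2 * du z = 0).
      { assert (0 < 1 + du z ^ 2) by nra. nra. }
      destruct (Cq (1/4) ltac:(lra)) as [d [Hd Hq']].
      set (r1 := z - Rmin d z / 2).
      pose proof (Rmin_l d z). pose proof (Rmin_r d z). assert (0 < Rmin d z) by (apply Rmin_pos; lra).
      destruct (mvt_dom Rm du d2u r1 z Hd2 ltac:(unfold r1; lra) ltac:(unfold r1; lra) HzR) as [c [Hc' E]].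
      assert (Hqc : d2u c < 1/4).
      { assert (Rabs (c - z) < d) by (unfold r1 in Hc'; rewrite Rabs_left1; lra).
        specialize (Hq' c H2). apply Rabs_def2 in Hq'. lra. }
      assert (0 <= d2u c).
      { destruct (Req_dec c z) as [->|Hne]; [lra|]. left. apply (IH c). unfold r1 in Hc'; lra. }
      destruct (IH r1 ltac:(unfold r1; lra)) as [Hq1 [Hp1 [Hp1' _]]].
      assert (Gr : r1 * (1 + 3 * du r1 ^ 2) - 2 * du r1 > 0).
      { pose proof (ode_g _ _ _ (Hode r1 (Hdomx r1 ltac:(unfold r1; lra)))) as G1.
        assert (0 < 2 * r1 * d2u r1 * (1 - 3 * du r1 ^ 2)).
        { assert (0 < 1 - 3 * du r1 ^ 2) by nra.
          assert (0 < r1) by (unfold r1; lra). 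
          apply Rmult_lt_0_compat; auto. apply Rmult_lt_0_compat; auto. lra. }
        assert (0 < 1 + du r1 ^ 2) by nra. nra. }
      assert (Edu : du r1 = du z - d2u c * (z - r1)) by lra.
      assert (Hid : r1 * (1 + 3 * du r1 ^ 2) - 2 * du r1 =
         (r1 * (1 + 3 * du r1 ^ 2) - 2 * du r1) - (z * (1 + 3 * du z ^ 2) - 2 * du z)) by lra.
      assert (Hid2 : (r1 * (1 + 3 * du r1 ^ 2) - 2 * du r1) - (z * (1 + 3 * du z ^ 2) - 2 * du z)
        = (r1 - z) * ((1 + 3 * du r1 ^ 2) + d2u c * (3 * z * (du r1 + du z) - 2))).
      { rewrite Edu. ring. }
      assert (Hbr : (1 + 3 * du r1 ^ 2) + d2u c * (3 * z * (du r1 + du z) - 2) > 0).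
      { assert (0 <= 3 * z * (du r1 + du z)) by (apply Rmult_le_pos; [lra|lra]).
        assert (0 <= du r1 ^ 2) by nra. nra. }
      assert (r1 - z < 0) by (unfold r1; lra).
      nra. }
    destruct (cont_pos d2u z Cq F6) as [e1 [He1 P1]].
    destruct (cont_pos du z Cp F3) as [e2 [He2 P2]].
    destruct (cont_pos (fun x => 0 * x + (-1) * du x + sq3) z (cont_at_aff _ _ _ _ _ Cp) ltac:(simpl; lra)) as [e3 [He3 P3]].
    assert (E4 : exists e4, 0 < e4 /\ forall x, Rabs (x - z) < e4 -> x <= sq3 -> du x < x / 2).
    { destruct (Rle_dec z sq3) as [Hzs|Hzs].
      - destruct (cont_pos (fun x => (1/2) * x + (-1) * du x + 0) z (cont_at_aff _ _ _ _ _ Cp) ltac:(simpl; specialize (F4 Hzs); lra)) as [e4 [He4 P4]].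
        exists e4. split; auto. intros x Hx _. specialize (P4 x Hx). simpl in P4. lra.
      - exists (z - sq3). split. lra. intros x Hx Hxs. exfalso.
        revert Hx; unfold Rabs; destruct Rcase_abs; lra. }
    destruct E4 as [e4 [He4 P4]].
    exists (Rmin (Rmin e1 e2) (Rmin e3 e4)). split. repeat apply Rmin_pos; auto.
    intros x Hx _.
    pose proof (Rmin_l (Rmin e1 e2) (Rmin e3 e4)). pose proof (Rmin_r (Rmin e1 e2) (Rmin e3 e4)).
    pose proof (Rmin_l e1 e2). pose proof (Rmin_r e1 e2). pose proof (Rmin_l e3 e4). pose proof (Rmin_r e3 e4).
    assert (Hxz : Rabs (x - z) < Rmin (Rmin e1 e2) (Rmin e3 e4)) by (rewrite Rabs_right; lra).
    unfold Inv. split. apply P1; lra. split. apply P2; lra. split.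
    specialize (P3 x ltac:(lra)). simpl in P3. lra.
    apply P4. lra.
Qed.


Lemma bound_on f a b : a <= b -> (forall c, a <= c <= b -> continuity_pt f c) ->
  exists B, 0 <= B /\ forall c, a <= c <= b -> Rabs (f c) <= B.
Proof.
  intros Hab Hc.
  destruct (continuity_ab_maj f a b Hab Hc) as [x1 [H1 _]].
  destruct (continuity_ab_min f a b Hab Hc) as [x2 [H2 _]].
  exists (Rabs (f x1) + Rabs (f x2)). split. pose proof (Rabs_pos (f x1)); pose proof (Rabs_pos (f x2)); lra.
  intros c Hc'. specialize (H1 c Hc'). specialize (H2 c Hc').
  revert H1 H2. unfold Rabs; repeat destruct Rcase_abs; lra.
Qed.

Lemma lip_on f f' a b : a <= b -> (forall c, a <= c <= b -> is_derive f c (f' c)) ->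
  (forall c, a <= c <= b -> continuity_pt f' c) ->
  exists K, 0 <= K /\ forall x y, a <= x <= b -> a <= y <= b -> Rabs (f x - f y) <= K * Rabs (x - y).
Proof.
  intros Hab Hd Hc.
  destruct (bound_on f' a b Hab Hc) as [K [HK HB]].
  exists K. split; auto. intros x y Hx Hy.
  assert (Hd' : forall c, Rmin y x < c < Rmax y x -> is_derive f c (f' c)).
  { intros c Hc'. apply Hd. pose proof (Rmin_l y x); pose proof (Rmin_r y x);
    pose proof (Rmax_l y x); pose proof (Rmax_r y x).
    unfold Rmin, Rmax in *; destruct Rle_dec; lra. }
  assert (Hc' : forall c, Rmin y x <= c <= Rmax y x -> continuity_pt f c).
  { intros c Hc'. apply continuity_pt_filterlim.
    apply (ex_derive_continuous (K:=R_AbsRing) (V:=R_NormedModule)). exists (f' c). apply Hd.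
    unfold Rmin, Rmax in *; destruct Rle_dec; lra. }
  destruct (MVT_gen f y x f' Hd' Hc') as [c [Hc2 E]].
  rewrite E, Rabs_mult. apply Rmult_le_compat_r. apply Rabs_pos. apply HB.
  unfold Rmin, Rmax in *; destruct Rle_dec; lra.
Qed.

Definition phi1 (y : R) := (y + y^3) / (3 * y^2 - 1).
Definition phi2 (y : R) := (1 + 4 * y^2 + 3 * y^4) / (2 * (3 * y^2 - 1)).
Definition dphi1 (y : R) := ((1 + 3 * y^2) * (3 * y^2 - 1) - (y + y^3) * (6 * y)) / (3 * y^2 - 1)^2.
Definition dphi2 (y : R) := ((8 * y + 12 * y^3) * (3 * y^2 - 1) - (1 + 4 * y^2 + 3 * y^4) * (6 * y)) / (2 * (3 * y^2 - 1)^2).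

Lemma phi1_der y : 3 * y^2 - 1 <> 0 -> is_derive phi1 y (dphi1 y).
Proof. intros H. unfold phi1, dphi1. auto_derive. exact H. field. exact H. Qed.
Lemma phi2_der y : 3 * y^2 - 1 <> 0 -> is_derive phi2 y (dphi2 y).
Proof.
  intros H. unfold phi2, dphi2. auto_derive.
  replace (2 * (3 * (y * (y * 1)) + - (1))) with (2 * (3 * y^2 - 1)) by ring. lra.
  field. exact H.
Qed.
Lemma dphi1_cont y : 3 * y^2 - 1 <> 0 -> continuity_pt dphi1 y.
Proof.
  intros H. apply continuity_pt_filterlim.
  apply (ex_derive_continuous (K:=R_AbsRing) (V:=R_NormedModule)).
  unfold dphi1. auto_derive.
  replace ((3 * (y * (y * 1)) + - (1)) * ((3 * (y * (y * 1)) + - (1)) * 1)) with ((3 * y^2 - 1) * (3 * y^2 - 1)) by ring.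
  intros E. apply Rmult_integral in E. destruct E; auto.
Qed.
Lemma dphi2_cont y : 3 * y^2 - 1 <> 0 -> continuity_pt dphi2 y.
Proof.
  intros H. apply continuity_pt_filterlim.
  apply (ex_derive_continuous (K:=R_AbsRing) (V:=R_NormedModule)).
  unfold dphi2. auto_derive.
  replace (2 * ((3 * (y * (y * 1)) + - (1)) * ((3 * (y * (y * 1)) + - (1)) * 1))) with (2 * ((3 * y^2 - 1) * (3 * y^2 - 1))) by ring.
  intros E. apply Rmult_integral in E. destruct E as [E|E]; [lra|]. apply Rmult_integral in E. destruct E; auto.
Qed.
Lemma phi_cont (f df : R -> R) y : is_derive f y (df y) -> continuity_pt f y.
Proof.
  intros H. apply continuity_pt_filterlim.
  apply (ex_derive_continuous (K:=R_AbsRing) (V:=R_NormedModule)). exists (df y). exact H.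
Qed.

Lemma den_neg b y : 0 <= b -> b < sq3 -> -1/2 <= y <= b -> 3 * y^2 - 1 < 0.
Proof.
  intros Hb Hbs Hy. pose proof sq3_sq. pose proof sq3_pos.
  assert (y^2 <= Rmax (1/4) (b^2)).
  { unfold Rmax. destruct (Rle_dec 0 y); destruct Rle_dec; nra. }
  assert (b^2 < 1/3) by nra.
  unfold Rmax in H1; destruct Rle_dec in H1; lra.
Qed.

Lemma phi_consts b : 0 <= b -> b < sq3 ->
  exists B1 B2 K1 K2, 0 <= B1 /\ 0 <= B2 /\ 0 <= K1 /\ 0 <= K2 /\
   (forall y, -1/2 <= y <= b -> Rabs (phi1 y) <= B1 /\ Rabs (phi2 y) <= B2) /\
   (forall x y, -1/2 <= x <= b -> -1/2 <= y <= b ->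
      Rabs (phi1 x - phi1 y) <= K1 * Rabs (x - y) /\ Rabs (phi2 x - phi2 y) <= K2 * Rabs (x - y)).
Proof.
  intros Hb Hbs.
  assert (Hn : forall y, -1/2 <= y <= b -> 3 * y^2 - 1 <> 0).
  { intros y Hy. pose proof (den_neg b y Hb Hbs Hy). lra. }
  assert (Hab : -1/2 <= b) by lra.
  destruct (bound_on phi1 _ _ Hab (fun c Hc => phi_cont _ _ c (phi1_der c (Hn c Hc)))) as [B1 [HB1 P1]].
  destruct (bound_on phi2 _ _ Hab (fun c Hc => phi_cont _ _ c (phi2_der c (Hn c Hc)))) as [B2 [HB2 P2]].
  destruct (lip_on phi1 dphi1 _ _ Hab (fun c Hc => phi1_der c (Hn c Hc)) (fun c Hc => dphi1_cont c (Hn c Hc))) as [K1 [HK1 Q1]].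
  destruct (lip_on phi2 dphi2 _ _ Hab (fun c Hc => phi2_der c (Hn c Hc)) (fun c Hc => dphi2_cont c (Hn c Hc))) as [K2 [HK2 Q2]].
  exists B1, B2, K1, K2. repeat split; auto.
Qed.


Definition deriv_at (Rm : Rbar) (f df : R -> R) (r : R) :=
  filterlim (fun h => (f (r + h) - f r) / h)
      (within (fun h => h <> 0 /\ in_dom Rm (r + h)) (locally 0)) (locally (df r)).

Definition cont_within (Rm : Rbar) (f : R -> R) (r : R) :=
  filterlim f (within (in_dom Rm) (locally r)) (locally (f r)).

Lemma deriv_transfer Rm Rm' f df g dg r e : 0 < e -> 0 <= r -> deriv_at Rm f df r ->
  (forall x, Rabs (x - r) < e -> 0 <= x -> in_dom Rm x /\ g x = f x) -> dg r = df r ->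
  deriv_at Rm' g dg r.
Proof.
  intros He Hr0 H Hag Hd. unfold deriv_at in *. apply filterlim_locally. intros eps.
  pose proof (proj1 (filterlim_locally _ _) H eps) as [d Hd'].
  assert (Hm : 0 < Rmin d e) by (apply Rmin_pos; [apply cond_pos|auto]).
  exists (mkposreal _ Hm). intros h Hh [Hh0 Hdom]. simpl in Hh.
  change (Rabs (h - 0) < Rmin d e) in Hh. rewrite Rminus_0_r in Hh.
  pose proof (Rmin_l d e). pose proof (Rmin_r d e).
  destruct Hdom as [Hd0 _].
  assert (Hr : Rabs (r - r) < e) by (rewrite Rminus_diag, Rabs_R0; auto).
  assert (Hx : Rabs (r + h - r) < e) by (rewrite Rplus_minus_l; lra).
  destruct (Hag (r + h) Hx Hd0) as [Hin Heq].
  destruct (Hag r Hr Hr0) as [Hin' Heq'].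
  rewrite Heq, Heq', Hd. apply (Hd' h). change (Rabs (h - 0) < d). rewrite Rminus_0_r. lra.
  split; auto.
Qed.

Lemma deriv_two Rm' g dg r l : is_derive g r l -> dg r = l -> deriv_at Rm' g dg r.
Proof.
  intros H Hd. apply is_derive_Reals in H. unfold deriv_at. apply filterlim_locally. intros eps.
  destruct (H eps (cond_pos eps)) as [d Hd'].
  exists d. intros h Hh [Hh0 _]. change (Rabs (h - 0) < d) in Hh. rewrite Rminus_0_r in Hh.
  rewrite Hd. apply (Hd' h Hh0 Hh).
Qed.

Lemma cont_transfer Rm Rm' f g r e : 0 < e -> 0 <= r -> cont_within Rm f r ->
  (forall x, Rabs (x - r) < e -> 0 <= x -> in_dom Rm x /\ g x = f x) ->
  cont_within Rm' g r.
Proof.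
  intros He Hr0 H Hag. unfold cont_within in *. apply filterlim_locally. intros eps.
  pose proof (proj1 (filterlim_locally _ _) H eps) as [d Hd'].
  assert (Hm : 0 < Rmin d e) by (apply Rmin_pos; [apply cond_pos|auto]).
  exists (mkposreal _ Hm). intros x Hx [Hx0 _]. change (Rabs (x - r) < Rmin d e) in Hx.
  pose proof (Rmin_l d e). pose proof (Rmin_r d e).
  assert (Hr : Rabs (r - r) < e) by (rewrite Rminus_diag, Rabs_R0; auto).
  destruct (Hag x ltac:(lra) Hx0) as [Hin Heq].
  destruct (Hag r Hr Hr0) as [Hin' Heq'].
  rewrite Heq, Heq'. apply (Hd' x). change (Rabs (x - r) < d). lra. auto.
Qed.

Lemma cont_two Rm' g r : cont_at g r -> cont_within Rm' g r.
Proof.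
  intros H. unfold cont_within. apply filterlim_locally. intros eps.
  destruct (H eps (cond_pos eps)) as [d [Hd H2]].
  exists (mkposreal d Hd). intros x Hx _. apply H2. exact Hx.
Qed.

Lemma ftc f df a b : a <= b -> (forall x, a <= x <= b -> is_derive f x (df x)) ->
  (forall x, a <= x <= b -> continuous df x) -> f b - f a = RInt df a b.
Proof.
  intros Hab Hd Hc.
  assert (H := is_RInt_derive (V:=R_CompleteNormedModule) f df a b).
  rewrite Rmin_left, Rmax_right in H by lra.
  specialize (H Hd Hc). symmetry. apply is_RInt_unique in H. exact H.
Qed.

Lemma RInt_diff_bound' (f g : R -> R) a c B :
  a <= c -> ex_RInt f a c -> ex_RInt g a c ->
  (forall s, a <= s <= c -> Rabs (f s - g s) <= B) ->
  Rabs (RInt f a c - RInt g a c) <= (c - a) * B.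
Proof.
  intros Hac Hf Hg Hb.
  assert (E : RInt f a c - RInt g a c = RInt (fun s => f s - g s) a c).
  { symmetry. apply (RInt_minus (V:=R_CompleteNormedModule)); auto. }
  rewrite E. apply abs_RInt_le_const; auto.
  apply (ex_RInt_minus (V:=R_NormedModule)); auto.
Qed.

Lemma exRI_loc (f : R -> R) a c : a <= c -> (forall s, a <= s <= c -> continuous f s) -> ex_RInt f a c.
Proof.
  intros Hac H. apply (ex_RInt_continuous (V:=R_CompleteNormedModule)).
  intros z Hz. rewrite Rmin_left, Rmax_right in Hz by lra. auto.
Qed.

Lemma RInt_deriv (f : R -> R) a r : (forall s, continuous f s) -> is_derive (fun t => RInt f a t) r (f r).
Proof.
  intros Hc. apply (is_derive_RInt (V:=R_CompleteNormedModule) f (fun t => RInt f a t) a r).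
  exists (mkposreal 1 Rlt_0_1). intros b _. apply (RInt_correct (V:=R_CompleteNormedModule)).
  apply exRI. auto.
  apply Hc.
Qed.


Lemma ode_phi r y : r <> 0 -> 3 * y^2 - 1 <> 0 -> ode_star r y (phi1 y * / r - phi2 y).
Proof.
  intros Hr Hy. unfold ode_star, phi1, phi2.
  assert (H2 : 2 * (3 * y^2 - 1) <> 0) by lra.
  field. auto.
Qed.

Lemma ode_solve r y q : ode_star r y q -> r <> 0 -> 3 * y^2 - 1 <> 0 -> q = phi1 y * / r - phi2 y.
Proof.
  intros H Hr Hy. pose proof (ode_phi r y Hr Hy) as H2. unfold ode_star in *.
  assert (E : 2 * r * (3 * y^2 - 1) * (q - (phi1 y * / r - phi2 y)) = 0) by lra.
  apply Rmult_integral in E. destruct E as [E|E].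
  - apply Rmult_integral in E. destruct E as [E|E]; [lra|contradiction].
  - lra.
Qed.

Lemma ib_lip a r1 r2 : 0 < a ->
  Rabs (/ clampI (a/2) (2*a) r1 - / clampI (a/2) (2*a) r2) <= (4 / (a*a)) * Rabs (r1 - r2).
Proof.
  intros Ha.
  pose proof (clampI_in (a/2) (2*a) r1 ltac:(lra)) as H1.
  pose proof (clampI_in (a/2) (2*a) r2 ltac:(lra)) as H2.
  pose proof (clampI_lip (a/2) (2*a) r1 r2) as H3.
  set (c1 := clampI (a/2) (2*a) r1) in *. set (c2 := clampI (a/2) (2*a) r2) in *.
  assert (E : / c1 - / c2 = (c2 - c1) / (c1 * c2)) by (field; lra).
  rewrite E. unfold Rdiv. rewrite Rabs_mult, Rabs_Rinv by nra.
  rewrite (Rabs_right (c1 * c2)) by nra. rewrite Rabs_minus_sym.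
  assert (0 < c1 * c2) by nra.
  assert (a * a / 4 <= c1 * c2) by nra.
  assert (/ (c1 * c2) <= 4 / (a * a)).
  { replace (4 / (a*a)) with (/ (a * a / 4)) by (field; lra).
    apply Rinv_le_contravar; nra. }
  pose proof (Rabs_pos (c1 - c2)).
  apply Rle_trans with (Rabs (c1 - c2) * (4 / (a * a))).
  apply Rmult_le_compat_l; auto. rewrite Rmult_comm. apply Rmult_le_compat_l. 
  apply Rlt_le, Rdiv_lt_0_compat; nra. auto.
Qed.

Lemma deriv_cplus (F : R -> R) y0 x0 r : (forall s, continuous F s) ->
  is_derive (fun t => y0 + RInt F x0 t) r (F r).
Proof.
  intros Hc. pose proof (RInt_deriv F x0 r Hc) as H. apply is_derive_Reals in H.
  apply is_derive_Reals. intros eps He. destruct (H eps He) as [d Hd].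
  exists d. intros h Hh Hh'. specialize (Hd h Hh Hh').
  replace ((y0 + RInt F x0 (r + h) - (y0 + RInt F x0 r)) / h) with ((RInt F x0 (r + h) - RInt F x0 r) / h).
  exact Hd. field. exact Hh.
Qed.

Lemma extend (a L : R) (u du d2u : R -> R) :
  0 < a -> is_solution (Finite a) u du d2u ->
  (forall r, 0 < r < a -> Inv du d2u r) ->
  (forall r, 0 < r < a -> du r <= L) -> L < sq3 -> 0 <= L ->
  exists Rm' v dv d2v, Rbar_lt (Finite a) Rm' /\ is_solution Rm' v dv d2v /\
     forall r, in_dom (Finite a) r -> v r = u r.
Proof.
  intros Ha Hsol HInv HL HLs HL0.
  destruct Hsol as [[Hd1 [Hd2 Hc]] [Hode [Hu0 Hp0]]].
  set (b := (L + sq3) / 2).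
  assert (Hb0 : 0 <= b) by (unfold b; pose proof sq3_pos; lra).
  assert (Hbs : b < sq3) by (unfold b; lra).
  assert (HLb : L < b) by (unfold b; lra).
  destruct (phi_consts b Hb0 Hbs) as [B1 [B2 [K1 [K2 [HB1 [HB2 [HK1 [HK2 [PB PL]]]]]]]]].
  set (cy := clampI (-1/2) b).
  set (cr := clampI (a/2) (2*a)).
  set (G := fun r y => phi1 (cy y) * / cr r - phi2 (cy y)).
  assert (Hcy : forall y, -1/2 <= cy y <= b) by (intros; apply clampI_in; lra).
  assert (Hcr : forall r, a/2 <= cr r <= 2*a) by (intros; apply clampI_in; lra).
  assert (Hib : forall r, 0 < / cr r <= 2 / a).
  { intros r. specialize (Hcr r). split. apply Rinv_0_lt_compat; lra.
    replace (2 / a) with (/ (a/2)) by (field; lra). apply Rinv_le_contravar; lra. }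
  set (M := B1 * (2/a) + B2). set (K := K1 * (2/a) + K2).
  assert (HM : 0 <= M) by (unfold M; assert (0 < 2/a) by (apply Rdiv_lt_0_compat; lra); nra).
  assert (HK : 0 <= K) by (unfold K; assert (0 < 2/a) by (apply Rdiv_lt_0_compat; lra); nra).
  assert (HGb : forall r y, Rabs (G r y) <= M).
  { intros r y. unfold G, M. destruct (PB (cy y) (Hcy y)) as [P1 P2]. specialize (Hib r).
    unfold Rminus. eapply Rle_trans. apply Rabs_triang. rewrite Rabs_Ropp, Rabs_mult.
    rewrite (Rabs_right (/ cr r)) by lra.
    assert (Rabs (phi1 (cy y)) * / cr r <= B1 * (2/a)).
    { apply Rmult_le_compat; auto. apply Rabs_pos. lra. lra. }
    lra. }
  assert (HGl : forall r y1 y2, Rabs (G r y1 - G r y2) <= K * Rabs (y1 - y2)).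
  { intros r y1 y2. unfold G, K.
    destruct (PL (cy y1) (cy y2) (Hcy y1) (Hcy y2)) as [L1 L2].
    pose proof (clampI_lip (-1/2) b y1 y2) as Lc. fold cy in Lc. specialize (Hib r).
    replace (phi1 (cy y1) * / cr r - phi2 (cy y1) - (phi1 (cy y2) * / cr r - phi2 (cy y2)))
      with ((phi1 (cy y1) - phi1 (cy y2)) * / cr r + - (phi2 (cy y1) - phi2 (cy y2))) by ring.
    eapply Rle_trans. apply Rabs_triang. rewrite Rabs_Ropp, Rabs_mult.
    rewrite (Rabs_right (/ cr r)) by lra.
    pose proof (Rabs_pos (cy y1 - cy y2)). pose proof (Rabs_pos (y1 - y2)).
    pose proof (Rabs_pos (phi1 (cy y1) - phi1 (cy y2))).
    assert (Rabs (phi1 (cy y1) - phi1 (cy y2)) * / cr r <= K1 * Rabs (y1 - y2) * (2/a)).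
    { apply Rmult_le_compat; auto; try lra. eapply Rle_trans. apply L1. apply Rmult_le_compat_l; auto. }
    assert (Rabs (phi2 (cy y1) - phi2 (cy y2)) <= K2 * Rabs (y1 - y2)).
    { eapply Rle_trans. apply L2. apply Rmult_le_compat_l; auto. }
    nra. }
  assert (HGc : forall y : R -> R, (forall s, continuous y s) -> forall s, continuous (fun s => G s (y s)) s).
  { intros y Hy s.
    assert (C1 : forall t, continuous (fun z => phi1 (cy z)) t).
    { apply (lip_cont _ K1 HK1). intros x z. eapply Rle_trans. apply (proj1 (PL _ _ (Hcy x) (Hcy z))).
      apply Rmult_le_compat_l; auto. apply clampI_lip. }
    assert (C2 : forall t, continuous (fun z => phi2 (cy z)) t).
    { apply (lip_cont _ K2 HK2). intros x z. eapply Rle_trans. apply (proj2 (PL _ _ (Hcy x) (Hcy z))).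
      apply Rmult_le_compat_l; auto. apply clampI_lip. }
    assert (C3 : forall t, continuous (fun z => / cr z) t).
    { apply (lip_cont _ (4 / (a*a))). apply Rlt_le, Rdiv_lt_0_compat; nra.
      intros x z. apply ib_lip; auto. }
    assert (Cm1 : continuous (fun s => mult (phi1 (cy (y s))) (/ cr s)) s).
    { apply (continuous_mult (K:=R_AbsRing) (fun s => phi1 (cy (y s))) (fun s => / cr s)).
      apply (continuous_comp y (fun z => phi1 (cy z))). apply Hy. apply C1. apply C3. }
    assert (Cm2 : continuous (fun s => phi2 (cy (y s))) s).
    { apply (continuous_comp y (fun z => phi2 (cy z))). apply Hy. apply C2. }
    pose proof (continuous_minus (V:=R_NormedModule) _ _ s Cm1 Cm2) as Cm.
    apply (continuous_ext _ _ s) with (2 := Cm). intros t. reflexivity. }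
  set (d := Rmin (Rmin (a/2) (1 / (2 * (K + 1)))) (Rmin (1/2) (b - L) / (M + 1))).
  assert (Hd : 0 < d).
  { unfold d. repeat apply Rmin_pos; try lra. apply Rdiv_lt_0_compat; lra.
    apply Rdiv_lt_0_compat; [apply Rmin_pos; lra | lra]. }
  assert (Hda : d <= a/2) by (unfold d; pose proof (Rmin_l (Rmin (a/2) (1 / (2 * (K + 1)))) (Rmin (1/2) (b - L) / (M + 1))); pose proof (Rmin_l (a/2) (1 / (2 * (K + 1)))); lra).
  assert (HKd : K * d <= 1/2).
  { assert (d <= 1 / (2 * (K + 1))).
    { unfold d. pose proof (Rmin_l (Rmin (a/2) (1 / (2 * (K + 1)))) (Rmin (1/2) (b - L) / (M + 1))); pose proof (Rmin_r (a/2) (1 / (2 * (K + 1)))); lra. }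
    assert (K * (1 / (2 * (K + 1))) <= 1/2).
    { apply Rmult_le_reg_l with (2 * (K+1)). lra. field_simplify; lra. }
    nra. }
  assert (HMd : M * d <= Rmin (1/2) (b - L)).
  { assert (d <= Rmin (1/2) (b - L) / (M + 1)).
    { unfold d. apply Rmin_r. }
    assert (0 < Rmin (1/2) (b - L)) by (apply Rmin_pos; lra).
    assert (M * (Rmin (1/2) (b - L) / (M + 1)) <= Rmin (1/2) (b - L)).
    { apply Rmult_le_reg_l with (M+1). lra. field_simplify; nra. }
    nra. }
  pose proof (Rmin_l (1/2) (b - L)). pose proof (Rmin_r (1/2) (b - L)).
  set (x0 := a - d / 4). set (y0 := du x0).
  assert (Hx0 : a/2 < x0 < a) by (unfold x0; lra).
  assert (Hx0d : a + d/2 < x0 + d) by (unfold x0; lra).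
  destruct (HInv x0 ltac:(lra)) as [_ [Hy0 _]]. pose proof (HL x0 ltac:(lra)) as Hy0'.
  fold y0 in Hy0, Hy0'.
  destruct (picard G K M x0 y0 d Hd HK HKd HM HGb HGl HGc) as [P [HPl HPi]].
  assert (HPc : forall s, continuous P s) by (apply (lip_cont _ M HM); auto).
  assert (HGP : forall s, continuous (fun s => G s (P s)) s) by (apply HGc; auto).
  assert (HPbox : forall r, x0 <= r <= x0 + d -> -1/2 <= P r <= b).
  { intros r Hr. rewrite (HPi r Hr).
    assert (HA : Rabs (RInt (fun s => G s (P s)) x0 r) <= (r - x0) * M).
    { apply abs_RInt_le_const. lra. apply exRI. auto. intros; apply HGb. }
    assert ((r - x0) * M <= M * d) by nra.
    revert HA; unfold Rabs; destruct Rcase_abs; intros; lra. }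
  assert (Hcyid : forall y, -1/2 <= y <= b -> cy y = y) by (intros; apply clampI_id; lra).
  assert (Hcrid : forall r, a/2 <= r <= 2*a -> cr r = r) by (intros; apply clampI_id; lra).
  assert (HPder : forall r, x0 < r < x0 + d -> is_derive P r (G r (P r))).
  { intros r Hr.
    apply (is_derive_ext_loc (fun t => y0 + RInt (fun s => G s (P s)) x0 t)).
    - assert (He : 0 < Rmin (r - x0) (x0 + d - r)) by (apply Rmin_pos; lra).
      exists (mkposreal _ He). intros t Ht. change (Rabs (t - r) < Rmin (r - x0) (x0 + d - r)) in Ht.
      pose proof (Rmin_l (r - x0) (x0 + d - r)). pose proof (Rmin_r (r - x0) (x0 + d - r)).
      symmetry. apply HPi. revert Ht; unfold Rabs; destruct Rcase_abs; intros; lra.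
    - apply (deriv_cplus (fun s => G s (P s))). auto. }
  assert (Hdn : forall y, -1/2 <= y <= b -> 3 * y^2 - 1 <> 0).
  { intros y Hy. pose proof (den_neg b y Hb0 Hbs Hy). lra. }
  assert (HPode : forall r, x0 <= r <= x0 + d -> ode_star r (P r) (G r (P r))).
  { intros r Hr. unfold G. rewrite Hcyid, Hcrid by (auto; lra). apply ode_phi. lra. auto. }
  assert (Hq : forall s, x0 <= s < a -> d2u s = G s (du s)).
  { intros s Hs. destruct (HInv s ltac:(lra)) as [_ [Hp1 _]]. pose proof (HL s ltac:(lra)).
    unfold G. rewrite Hcyid, Hcrid by lra.
    apply ode_solve. apply Hode. split; simpl; lra. lra. apply Hdn. lra. }
  assert (Hdu_cont : forall s, 0 < s < a -> continuous du s).
  { intros s Hs. apply cont_at_continuous. eapply deriv_cont; eauto; simpl; lra. }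
  assert (Hd2u_cont : forall s, 0 < s < a -> continuous d2u s).
  { intros s Hs. apply cont_at_continuous. eapply cdom_cont; eauto; simpl; lra. }
  assert (Hdu_int : forall r, x0 <= r < a -> du r = y0 + RInt d2u x0 r).
  { intros r Hr. unfold y0. rewrite <- (ftc du d2u x0 r). ring. lra.
    intros x Hx. apply (deriv_int (Finite a)); auto; simpl; lra.
    intros x Hx. apply Hd2u_cont. lra. }
  assert (Huniq : forall r, x0 <= r < a -> du r = P r).
  { intros r Hr. apply Rminus_diag_uniq. apply (geo_zero _ (2 * M * d)).
    intros n. revert r Hr. induction n as [|n IH]; intros r Hr.
    - rewrite Hdu_int, HPi by lra. rewrite sub_cancel2. simpl.
      eapply Rle_trans. apply RInt_diff_bound' with (B := 2 * M). lra.
      apply exRI_loc. lra. intros; apply Hd2u_cont; lra. apply exRI. auto.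
      intros s Hs. rewrite Hq by lra. unfold Rminus. eapply Rle_trans. apply Rabs_triang.
      rewrite Rabs_Ropp. pose proof (HGb s (du s)). pose proof (HGb s (P s)). lra.
      nra.
    - rewrite Hdu_int, HPi by lra. rewrite sub_cancel2.
      eapply Rle_trans. apply RInt_diff_bound' with (B := K * (2 * M * d * (1/2)^n)). lra.
      apply exRI_loc. lra. intros; apply Hd2u_cont; lra. apply exRI. auto.
      intros s Hs. rewrite Hq by lra. eapply Rle_trans. apply HGl. apply Rmult_le_compat_l; auto.
      apply IH. lra.
      simpl. assert (0 <= (1/2)^n) by (apply pow_le; lra).
      assert (0 <= K * (2 * M * d * (1 / 2) ^ n)) by (apply Rmult_le_pos; auto; apply Rmult_le_pos; nra).
      assert ((r - x0) * (K * (2 * M * d * (1 / 2) ^ n)) <= d * (K * (2 * M * d * (1 / 2) ^ n))) by nra.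
      assert (d * (K * (2 * M * d * (1 / 2) ^ n)) = (K * d) * (2 * M * d * (1/2)^n)) by ring.
      assert (0 <= 2 * M * d * (1/2)^n) by (apply Rmult_le_pos; [nra|auto]).
      assert (0 <= (1/2 - K * d) * (2 * M * d * (1/2)^n)) by (apply Rmult_le_pos; lra).
      nra. }
  set (V := fun r => u x0 + RInt P x0 r).
  assert (HuV : forall r, x0 <= r < a -> u r = V r).
  { intros r Hr. unfold V.
    assert (E : u r - u x0 = RInt du x0 r).
    { apply ftc. lra. intros x Hx. apply (deriv_int (Finite a)); auto; simpl; lra.
      intros x Hx. apply Hdu_cont. lra. }
    assert (E2 : RInt du x0 r = RInt P x0 r).
    { apply RInt_ext. intros x Hx. rewrite Rmin_left, Rmax_right in Hx by lra. apply Huniq. lra. }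
    lra. }
  assert (HVder : forall r, is_derive V r (P r)).
  { intros r. unfold V. apply deriv_cplus. auto. }
  set (m := (x0 + a) / 2).
  set (v := fun r => if Rlt_dec r m then u r else V r).
  set (dv := fun r => if Rlt_dec r m then du r else P r).
  set (d2v := fun r => if Rlt_dec r m then d2u r else G r (P r)).
  assert (Hm : x0 < m < a) by (unfold m; lra).
  assert (NR : forall x, x0 < x -> v x = V x /\ dv x = P x /\ d2v x = G x (P x)).
  { intros x Hx. unfold v, dv, d2v. destruct Rlt_dec as [Hl|Hl]; [|auto].
    split. apply HuV; lra. split. apply Huniq; lra. rewrite <- (Huniq x) by lra.
    apply Hq. lra. }
  assert (NL : forall x, x < m -> v x = u x /\ dv x = du x /\ d2v x = d2u x).
  { intros x Hx. unfold v, dv, d2v. destruct Rlt_dec; [auto|lra]. }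
  exists (Finite (a + d/2)), v, dv, d2v.
  split. simpl. lra.
  split.
  2:{ intros r [Hr0 Hr]. simpl in Hr. destruct (Rlt_dec r m). apply NL; auto. rewrite (proj1 (NR r ltac:(lra))).
      symmetry. apply HuV. lra. }
  assert (Hlocal : forall r, 0 <= r < m -> forall x, Rabs (x - r) < m - r -> 0 <= x -> in_dom (Finite a) x /\ x < m).
  { intros r Hr x Hx Hxx. revert Hx; unfold Rabs; destruct Rcase_abs; intros; split; try split; simpl; lra. }
  assert (Hlocr : forall r, m <= r -> locally r (fun x => x0 < x)).
  { intros r Hr. assert (He : 0 < r - x0) by lra. exists (mkposreal _ He). intros x Hx.
    change (Rabs (x - r) < r - x0) in Hx. revert Hx; unfold Rabs; destruct Rcase_abs; intros; lra. }
  split; [split; [|split]|split; [|split]].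
  - intros r [Hr0 Hr]. simpl in Hr. destruct (Rlt_dec r m) as [Hl|Hl].
    + apply (deriv_transfer (Finite a) _ u du v dv r (m - r)); try lra.
      apply Hd1. split; simpl; lra.
      intros x Hx Hxx. destruct (Hlocal r ltac:(lra) x Hx Hxx) as [Hin Hxm]. split; auto. apply NL; auto.
      apply NL; auto.
    + apply (deriv_two _ v dv r (P r)).
      apply (is_derive_ext_loc V). destruct (Hlocr r ltac:(lra)) as [e He]. exists e. intros x Hx.
      symmetry. apply NR. apply He; auto. apply HVder.
      apply NR. lra.
  - intros r [Hr0 Hr]. simpl in Hr. destruct (Rlt_dec r m) as [Hl|Hl].
    + apply (deriv_transfer (Finite a) _ du d2u dv d2v r (m - r)); try lra.
      apply Hd2. split; simpl; lra.
      intros x Hx Hxx. destruct (Hlocal r ltac:(lra) x Hx Hxx) as [Hin Hxm]. split; auto. apply NL; auto.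
      apply NL; auto.
    + apply (deriv_two _ dv d2v r (G r (P r))).
      apply (is_derive_ext_loc P). destruct (Hlocr r ltac:(lra)) as [e He]. exists e. intros x Hx.
      symmetry. apply NR. apply He; auto. apply HPder. lra.
      apply NR. lra.
  - intros r [Hr0 Hr]. simpl in Hr. destruct (Rlt_dec r m) as [Hl|Hl].
    + apply (cont_transfer (Finite a) _ d2u d2v r (m - r)); try lra.
      apply Hc. split; simpl; lra.
      intros x Hx Hxx. destruct (Hlocal r ltac:(lra) x Hx Hxx) as [Hin Hxm]. split; auto. apply NL; auto.
    + apply (cont_transfer p_infty _ (fun s => G s (P s)) d2v r (r - x0)); try lra.
      apply cont_two. apply continuous_cont_at. apply HGP.
      intros x Hx Hxx. split. split; simpl; auto. apply NR.
      revert Hx; unfold Rabs; destruct Rcase_abs; intros; lra.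
  - intros r [Hr0 Hr]. simpl in Hr. destruct (Rlt_dec r m) as [Hl|Hl].
    + destruct (NL r Hl) as [_ [-> ->]]. apply Hode. split; simpl; lra.
    + destruct (NR r ltac:(lra)) as [_ [-> ->]]. apply HPode. lra.
  - destruct (NL 0 ltac:(lra)) as [-> _]. auto.
  - destruct (NL 0 ltac:(lra)) as [_ [-> _]]. auto.
Qed.


Lemma q_big c p q : 3 <= c -> 0 < p -> p < sq3 -> ode_star c p q -> 1/4 <= q.
Proof.
  intros Hc Hp Hps H. apply ode_g in H. pose proof sq3_bnd. pose proof sq3_sq.
  assert (Hp2 : 0 < 1 - 3 * p^2) by nra.
  assert (0 <= c * p^2) by (apply Rmult_le_pos; nra).
  assert (Hg : c / 2 <= c * (1 + 3 * p^2) - 2 * p).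
  { assert (c * (1 + 3*p^2) = c + 3 * (c * p^2)) by ring. lra. }
  assert (0 <= p^2 * (c * (1 + 3 * p^2) - 2 * p)) by (apply Rmult_le_pos; nra).
  assert (HL : c / 2 <= (1 + p^2) * (c * (1 + 3 * p^2) - 2 * p)) by nra.
  destruct (Rle_dec (1/4) q) as [|Hn]; auto. exfalso.
  assert (2 * c * q * (1 - 3 * p^2) < c / 2).
  { destruct (Rle_dec q 0).
    - assert (0 <= c * (-q)) by (apply Rmult_le_pos; lra).
      assert (0 <= c * (-q) * (1 - 3 * p^2)) by (apply Rmult_le_pos; lra).
      assert (2 * c * q * (1 - 3 * p^2) = - 2 * (c * (-q) * (1 - 3 * p^2))) by ring. lra.
    - assert (0 < c * (1/4 - q)) by (apply Rmult_lt_0_compat; lra).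
      assert (0 <= (c * q) * (3 * p^2)) by (apply Rmult_le_pos; [apply Rmult_le_pos|]; nra).
      assert (2 * c * q * (1 - 3 * p^2) = 2 * (c * q) - 2 * ((c * q) * (3 * p^2))) by ring.
      assert (c * (1/4 - q) = c/4 - c * q) by field. lra. }
  lra.
Qed.

Theorem theorem2 (Rm : Rbar) (u du d2u : R -> R) :
  Rbar_lt 0 Rm ->
  is_maximal_solution Rm u du d2u ->
  (exists rM : R, Rm = Finite rM /\ 0 < rM) /\
  filterlim du (at_left (real Rm)) (locally (1 / sqrt 3)).
Proof.
  intros Hm [Hsol Hmax].
  pose proof (inv_all Rm u du d2u Hm Hsol) as HInv.
  pose proof sq3_bnd as SB.
  assert (Hfin : exists a, Rm = Finite a /\ 0 < a).
  { destruct Rm as [a| |]; simpl in Hm.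
    - exists a; auto.
    - exfalso. destruct Hsol as [[_ [Hd2 _]] [Hode _]].
      destruct (mvt_dom p_infty du d2u 3 9 Hd2 ltac:(lra) ltac:(lra) I) as [c [Hc E]].
      destruct (HInv c ltac:(lra) I) as [_ [Hpc [Hpc' _]]].
      pose proof (q_big c (du c) (d2u c) ltac:(lra) Hpc Hpc' (Hode c ltac:(split; simpl; auto; lra))).
      destruct (HInv 9 ltac:(lra) I) as [_ [_ [H9 _]]].
      destruct (HInv 3 ltac:(lra) I) as [_ [H3 _]].
      nra.
    - contradiction. }
  destruct Hfin as [a [-> Ha]]. split. exists a; auto. simpl.
  assert (HI : forall r, 0 < r < a -> Inv du d2u r) by (intros r Hr; apply HInv; simpl; lra).
  assert (Hmono : forall x y, 0 < x -> x <= y -> y < a -> du x <= du y).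
  { intros x y Hx Hxy Hy. destruct (Rle_lt_or_eq_dec x y Hxy) as [Hlt|Heq]; [|subst; lra].
    destruct Hsol as [[_ [Hd2 _]] _].
    destruct (mvt_dom (Finite a) du d2u x y Hd2 Hx Hlt Hy) as [c [Hc E]].
    destruct (HI c ltac:(lra)) as [Hq _]. nra. }
  set (E := fun y => exists r, 0 < r < a /\ y = du r).
  assert (HEb : bound E).
  { exists sq3. intros y [r [Hr ->]]. destruct (HI r Hr) as [_ [_ [H _]]]. lra. }
  assert (HEn : exists y, E y) by (exists (du (a/2)); exists (a/2); split; [lra|auto]).
  destruct (completeness E HEb HEn) as [L [HLub HLlub]].
  assert (HLs : L <= sq3).
  { apply HLlub. intros y [r [Hr ->]]. destruct (HI r Hr) as [_ [_ [H _]]]. lra. }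
  assert (HL0 : 0 <= L).
  { destruct (HI (a/2) ltac:(lra)) as [_ [H _]]. assert (E (du (a/2))) by (exists (a/2); split; [lra|auto]).
    apply HLub in H0. lra. }
  assert (HLe : L = sq3).
  { destruct (Rle_lt_or_eq_dec L sq3 HLs) as [Hlt|]; auto. exfalso.
    destruct (extend a L u du d2u Ha Hsol HI) as [Rm' [v [dv [d2v [H1 [H2 H3]]]]]].
    intros r Hr. apply HLub. exists r; auto. auto. auto.
    apply (Hmax Rm' v dv d2v H1 H2). exact H3. }
  fold sq3. apply filterlim_locally. intros eps.
  assert (Hr0 : exists r0, 0 < r0 < a /\ sq3 - eps < du r0).
  { apply Classical_Prop.NNPP. intros Hn.
    assert (is_upper_bound E (sq3 - eps)).
    { intros y [r [Hr ->]]. destruct (Rle_dec (du r) (sq3 - eps)); auto. exfalso. apply Hn.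
      exists r. split; auto. lra. }
    apply HLlub in H. pose proof (cond_pos eps). lra. }
  destruct Hr0 as [r0 [Hr0 Hr0']].
  assert (He : 0 < a - r0) by lra.
  exists (mkposreal _ He). intros x Hx Hxa. change (Rabs (x - a) < a - r0) in Hx.
  assert (Hx' : r0 < x) by (revert Hx; unfold Rabs; destruct Rcase_abs; intros; lra).
  change (Rabs (du x - sq3) < eps).
  pose proof (Hmono r0 x ltac:(lra) ltac:(lra) Hxa).
  destruct (HI x ltac:(lra)) as [_ [_ [Hxs _]]].
  rewrite Rabs_left; lra.
Qed.
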